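(* Let $N=(X,Y,<)$ be a node of a regular poset $(P,\le,A_1\ldots A_k)$. For every $k\in\mathbb{N}$ the following are equivalent: (1) for every non-empty $A\subseteq X$, $|A{\uparrow}\cap Y|\ge \min\{|A|+k,|Y|\}$; (2) for every non-empty $B\subseteq Y$, $|B{\downarrow}\cap X|\ge\min\{|B|+k,|X|\}$.
   Context: Let $(P,\le)$ be a finite poset of width $w$. For $A\subseteq P$ let $A{\uparrow}=\{y\in P: x\le y\text{ for some }x\in A\}$ and $A{\downarrow}=\{y\in P: y\le x\text{ for some }x\in A\}$. For maximal antichains $A,B$ write $A\sqsubseteq B$ if $A\subseteq B{\downarrow}$, and $A\sqsubset B$ if also $A\ne B$. For disjoint antichains $A\sqsubset B$, $(A,B,<)$ denotes the bipartite graph with classes $A,B$ and an edge $(a<b)$ for each $a\in A$, $b\in B$ with $a<b$; it is regular if every edge lies in some perfect matching. A regular poset is a triple $(P,\le,A_1\ldots A_k)$ where $A_1,\dots,A_k$ are maximum antichains of $P$ such that: they partition $P$; $(\{A_1,\dots,A_k\},\sqsubseteq)$ is a linear order with minimum $A_1$ and maximum $A_2$; $a<b$ for all $a\in A_1$, $b\in A_2$; and for every $t\in[2,k]$ and every two antichains $A_p\sqsubset A_s$ that are consecutive in the linear order $(\{A_1,\dots,A_t\},\sqsubseteq)$, the bipartite graph $(A_p,A_s,<)$ is regular. A node of the regular poset is a bipartite graph $(X,Y,<)$ such that for some $t\in[2,k]$ and some $A_p\sqsubset A_s$ consecutive in $(\{A_1,\dots,A_t\},\sqsubseteq)$, we have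 $X\subseteq A_p$, $Y\subseteq A_s$, and $X\cup Y$ is the vertex set of a connected component of $(A_p,A_s,<)$ (with edges $(x<y)$, $x\in X$, $y\in Y$, $x<y$). *)

(* Defs.v *)
From mathcomp Require Import all_boot.
Set Implicit Arguments. Unset Strict Implicit. Unset Printing Implicit Defensive.

Section Defs.
Variables (T : finType) (le : rel T).

Definition is_poset : Prop :=
  [/\ reflexive le, antisymmetric le & transitive le].

Definition lt (x y : T) : bool := (x != y) && le x y.

Definition upset (A : {set T}) : {set T} := [set y | [exists x in A, le x y]].
Definition downset (A : {set T}) : {set T} := [set y | [exists x in A, le y x]].

Definition antichain (A : {set T}) : Prop :=
  forall x y, x \in A -> y \in A -> le x y -> x = y.

Definition maximum_antichain (A : {set T}) : Prop :=
  antichain A /\ forall B : {set T}, antichain B -> #|B| <= #|A|.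

Definition sqle (A B : {set T}) : bool := A \subset downset B.
Definition sqlt (A B : {set T}) : bool := sqle A B && (A != B).

Definition is_perfect_matching (X Y : {set T}) (f : T -> T) : Prop :=
  [/\ {in X, forall x, lt x (f x)}, {in X &, injective f} & f @: X = Y].

Definition regular_bip (X Y : {set T}) : Prop :=
  forall a b, a \in X -> b \in Y -> lt a b ->
    exists f : T -> T, is_perfect_matching X Y f /\ f a = b.

Definition Ai (As : seq {set T}) (i : nat) : {set T} := nth set0 As i.

(* With 0-based indices: A_p and A_s (p, s < t) are consecutive in the
   linear order ({A_0,...,A_{t-1}}, ⊑). *)
Definition consecutive (As : seq {set T}) (t p s : nat) : Prop :=
  [/\ p < t, s < t, sqlt (Ai As p) (Ai As s) &
      forall q, q < t -> ~ (sqlt (Ai As p) (Ai As q) && sqlt (Ai As q) (Ai As s))].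

(* Regular poset (P, le, A_1 ... A_k), with A_1 = Ai As 0, A_2 = Ai As 1,
   k = size As; "t in [2,k]" becomes 2 <= t <= size As. *)
Definition regular_poset (As : seq {set T}) : Prop :=
  2 <= size As /\
      (forall i, i < size As -> maximum_antichain (Ai As i)) /\
      (forall i j, i < size As -> j < size As -> i != j ->
         [disjoint Ai As i & Ai As j]) /\
      (forall x, exists2 i, i < size As & x \in Ai As i) /\
      (forall i j, i < size As -> j < size As ->
         sqle (Ai As i) (Ai As j) || sqle (Ai As j) (Ai As i)) /\
      (forall i, i < size As -> sqle (Ai As 0) (Ai As i) /\ sqle (Ai As i) (Ai As 1)) /\
      (forall a b, a \in Ai As 0 -> b \in Ai As 1 -> lt a b) /\
      (forall t p s, 2 <= t <= size As -> consecutive As t p s ->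
         regular_bip (Ai As p) (Ai As s)).

Definition bip_edge (A B : {set T}) : rel T :=
  fun u v => ((u \in A) && (v \in B) && lt u v) || ((v \in A) && (u \in B) && lt v u).

Definition is_component (A B C : {set T}) : Prop :=
  exists2 u, u \in A :|: B & C = [set v | connect (bip_edge A B) u v].

Definition node (As : seq {set T}) (X Y : {set T}) : Prop :=
  exists t p s, [/\ 2 <= t <= size As, consecutive As t p s,
    X \subset Ai As p, Y \subset Ai As s &
    is_component (Ai As p) (Ai As s) (X :|: Y)].

End Defs.

(* Main.v *)
Require Import Defs.
From mathcomp Require Import all_boot.
From mathcomp Require Import zify.
Set Implicit Arguments. Unset Strict Implicit. Unset Printing Implicit Defensive.

Lemma half (T : finType) (le : rel T) (X Y : {set T}) k : #|X| = #|Y| ->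
 (forall A : {set T}, A \subset X -> A != set0 ->
     minn (#|A| + k) #|Y| <= #|upset le A :&: Y|) ->
 forall B : {set T}, B \subset Y -> B != set0 ->
     minn (#|B| + k) #|X| <= #|downset le B :&: X|.
Proof.
move=> eXY H B sBY nB.
have sDX : downset le B :&: X \subset X by apply: subsetIr.
have [eD|neD] := eqVneq (downset le B :&: X) X.
  by rewrite eD geq_minr.
have nA : X :\: (downset le B :&: X) != set0.
  apply/negP; rewrite setD_eq0 => sXD; apply/negP: neD; rewrite negbK eqEsubset sDX.
  exact: sXD.
have disj : upset le (X :\: (downset le B :&: X)) :&: Y \subset Y :\: B.
  apply/subsetP => y; rewrite !inE => /andP[/existsP[x /andP[xA lexy]] yY].
  rewrite yY andbT; apply/negP => yB.
  move: xA; rewrite !inE => /andP[/negP xD xX]; apply: xD.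
  rewrite xX andbT; apply/existsP; exists y; by rewrite yB lexy.
have := H _ (subsetDl _ _) nA.
have := subset_leq_card disj.
rewrite !cardsD (setIidPr sBY) (setIidPr sDX).
have := subset_leq_card sDX.
move: nB; rewrite -card_gt0 => nB.
lia.
Qed.

Lemma node_card (T : finType) (le : rel T) (As : seq {set T}) (X Y : {set T}) :
  regular_poset le As -> node le As X Y -> #|X| = #|Y|.
Proof.
move=> [_ [Hmax [Hdisj [_ [_ [_ [_ Hreg]]]]]]] [t [p [s [Ht Hc sXP sYS [u uPS eC]]]]].
have Hc' := Hc; case: Hc' => pt st /andP[Hsq Hne] _.
have ps : p != s by apply: contraNneq Hne => ->.
have pz : p < size As by case/andP: Ht => _ ht; exact: leq_trans pt ht.
have sz : s < size As by case/andP: Ht => _ ht; exact: leq_trans st ht.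
have D := Hdisj _ _ pz sz ps.
have nin : forall v, v \in Ai As p -> v \in Ai As s -> False.
  by move=> v vp vs; move/disjoint_setI0: D => /setP/(_ v); rewrite !inE vp vs.
have [a ap] : exists a, a \in Ai As p.
  case/setUP: uPS => [up|us]; first by exists u.
  have [_ /(_ _ (proj1 (Hmax _ sz)))] := Hmax _ pz.
  move=> hc; have : 0 < #|Ai As p| by apply: leq_trans hc; apply/card_gt0P; exists u.
  by case/card_gt0P => a ap; exists a.
have := subsetP Hsq a ap; rewrite inE => /existsP[b /andP[bs lab]].
have ltab : lt le a b.
  rewrite /lt lab andbT; apply/eqP => eab; subst b; exact: nin a ap bs.
have [f [[Hf finj fim] _]] := Hreg _ _ _ Ht Hc a b ap bs ltab.
have inC v : (v \in X :|: Y) = connect (bip_edge le (Ai As p) (Ai As s)) u v.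
  by rewrite eC inE.
have XP x : x \in X -> x \in Ai As p by move=> xX; exact: (subsetP sXP).
have YS y : y \in Y -> y \in Ai As s by move=> yY; exact: (subsetP sYS).
have s1 : f @: X \subset Y.
  apply/subsetP => _ /imsetP[x xX ->].
  have xp := XP x xX.
  have fxs : f x \in Ai As s by rewrite -fim; apply: imset_f.
  have : f x \in X :|: Y.
    rewrite inC; apply: connect_trans (_ : connect _ u x) _.
      by rewrite -inC inE xX.
    by apply: connect1; rewrite /bip_edge xp fxs Hf.
  case/setUP => // fX; exfalso; exact: nin _ (XP _ fX) fxs.
have s2 : Y \subset f @: X.
  apply/subsetP => y yY.
  have ys := YS y yY.
  move: (ys); rewrite -fim => /imsetP[x xp exy].
  have : x \in X :|: Y.
    rewrite inC; apply: connect_trans (_ : connect _ u y) _.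
      by rewrite -inC inE yY orbT.
    by apply: connect1; rewrite /bip_edge xp ys exy Hf ?orbT.
  case/setUP => [xX|xY]; first by rewrite exy; apply: imset_f.
  exfalso; exact: nin _ xp (YS _ xY).
apply/eqP; rewrite eqn_leq; apply/andP; split.
  rewrite -(card_in_imset (f := f)); first exact: subset_leq_card.
  by move=> x y xX yX; apply: finj; apply: XP.
exact: leq_trans (subset_leq_card s2) (leq_imset_card _ _).
Qed.

Theorem proposition8 (T : finType) (le : rel T) (As : seq {set T}) (X Y : {set T}) :
  is_poset le -> regular_poset le As -> node le As X Y ->
  forall k : nat,
    (forall A : {set T}, A \subset X -> A != set0 ->
       minn (#|A| + k) #|Y| <= #|upset le A :&: Y|) <->
    (forall B : {set T}, B \subset Y -> B != set0 ->
       minn (#|B| + k) #|X| <= #|downset le B :&: X|).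
Proof.
move=> _ Hr Hn k; have e := node_card Hr Hn; split.
  exact: half.
exact: (@half T (fun x y => le y x) Y X k (esym e)).
Qed.
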